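(* For every $\kappa\in(0,1)$ the function $H_\kappa$ is smooth and $$H_\kappa(x)=1+\frac{x^2}{2(1-\kappa)^2}+o\Big(\frac{x^2}{(1-\kappa)^2}\Big)\quad(x\to0),\qquad H_\kappa(x)=x+\kappa\ln x+\kappa^2\frac{\ln x}{x}+\mathcal O(1)\quad(x\to\infty).$$
   Context: For $\kappa\in(0,1)$ let $G_\kappa:[1,\infty)\to[0,\infty)$, $G_\kappa(x)=\sqrt{x^2-1}-\kappa\ln(x+\sqrt{x^2-1})$, which is a strictly increasing bijection, and $H_\kappa=G_\kappa^{-1}:[0,\infty)\to[1,\infty)$. *)

(* Defs.v *)
From Stdlib Require Import Reals Lra ClassicalEpsilon.
From Coquelicot Require Import Coquelicot.
Open Scope R_scope.

Definition Gk (k x : R) : R :=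
  sqrt (x ^ 2 - 1) - k * ln (x + sqrt (x ^ 2 - 1)).

(* H_kappa = G_kappa^{-1} : [0,oo) -> [1,oo).  For y >= 0 this is the unique
   x >= 1 with G_kappa x = y (G_kappa is a strictly increasing bijection
   [1,oo) -> [0,oo) for kappa in (0,1)); outside [0,oo) the value is
   irrelevant (an arbitrary choice). *)
Definition Hk (k y : R) : R :=
  epsilon (inhabits 1) (fun x => 1 <= x /\ Gk k x = y).

(* Main.v *)
Require Import Defs.
From Stdlib Require Import Reals Lra Psatz ClassicalEpsilon FunctionalExtensionality.
From Coquelicot Require Import Coquelicot.
Open Scope R_scope.

Definition phi (k t : R) := sinh t - k * t.

Lemma cosh_ge1 t : 1 <= cosh t.
Proof.
  unfold cosh.
  assert (h1 : exp t = exp (t/2) * exp (t/2)) by (rewrite <- exp_plus; f_equal; lra).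
  assert (h2 : exp (-t) = exp (-t/2) * exp (-t/2)) by (rewrite <- exp_plus; f_equal; lra).
  assert (h3 : exp (t/2) * exp (-t/2) = 1) by (rewrite <- exp_plus, <- exp_0; f_equal; lra).
  rewrite h1, h2. pose proof (pow2_ge_0 (exp (t/2) - exp (-t/2))). nra.
Qed.

Lemma is_derive_sinh t : is_derive sinh t (cosh t).
Proof. apply is_derive_Reals, derivable_pt_lim_sinh. Qed.
Lemma is_derive_cosh t : is_derive cosh t (sinh t).
Proof. apply is_derive_Reals, derivable_pt_lim_cosh. Qed.

Lemma is_derive_phi k t : is_derive (phi k) t (cosh t - k).
Proof.
  unfold phi. apply (is_derive_minus sinh (fun t => k * t)).
  apply is_derive_sinh.
  auto_derive; auto; ring.
Qed.

Lemma phi_cont k t : continuity_pt (phi k) t.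
Proof.
  apply continuity_pt_filterlim. apply (ex_derive_continuous (phi k) t).
  eexists. apply is_derive_phi.
Qed.

Lemma phi_mono k (hk1 : k < 1) a b : a <= b -> (1 - k) * (b - a) <= phi k b - phi k a.
Proof.
  intros hab.
  destruct (MVT_gen (phi k) a b (fun t => cosh t - k)) as [c [_ hc]].
  - intros; apply is_derive_phi.
  - intros; apply phi_cont.
  - rewrite hc. pose proof (cosh_ge1 c). nra.
Qed.

Lemma phi_0 k : phi k 0 = 0.
Proof. unfold phi; rewrite sinh_0; ring. Qed.

Lemma phi_surj k (hk1 : k < 1) y : exists t, phi k t = y.
Proof.
  set (a := - Rabs y / (1 - k)). set (b := Rabs y / (1 - k)).
  assert (hb : 0 <= b) by (unfold b; apply Rdiv_le_0_compat; [apply Rabs_pos|lra]).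
  assert (ha : a = - b) by (unfold a, b; field; lra).
  pose proof (phi_mono k hk1 0 b hb) as h1.
  pose proof (phi_mono k hk1 a 0 ltac:(lra)) as h2.
  rewrite phi_0 in h1, h2.
  assert (e1 : (1 - k) * (b - 0) = Rabs y) by (unfold b; field; lra).
  assert (e2 : (1 - k) * (0 - a) = Rabs y) by (rewrite ha; unfold b; field; lra).
  destruct (IVT_gen (phi k) a b y) as [t [_ ht]].
  - intro; apply phi_cont.
  - pose proof (Rle_abs y). pose proof (Rle_abs (-y)). rewrite Rabs_Ropp in *.
    split; [apply Rle_trans with (phi k a); [apply Rmin_l|lra] | apply Rle_trans with (phi k b); [lra|apply Rmax_r]].
  - exists t; exact ht.
Qed.

Definition T (k y : R) : R := epsilon (inhabits 0) (fun t => phi k t = y).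

Lemma T_spec k (hk1 : k < 1) y : phi k (T k y) = y.
Proof. unfold T. apply (epsilon_spec (inhabits 0) (fun t => phi k t = y)). apply phi_surj; auto. Qed.

Lemma phi_inj k (hk1 : k < 1) a b : phi k a = phi k b -> a = b.
Proof.
  intros h. destruct (Rle_lt_dec a b).
  - pose proof (phi_mono k hk1 a b r). nra.
  - pose proof (phi_mono k hk1 b a ltac:(lra)). nra.
Qed.

Lemma T_phi k (hk1 : k < 1) t : T k (phi k t) = t.
Proof. apply (phi_inj k hk1). apply T_spec; auto. Qed.

Lemma T_lip k (hk1 : k < 1) x y : x <= y -> 0 <= T k y - T k x <= (y - x) / (1 - k).
Proof.
  intros hxy.
  pose proof (T_spec k hk1 x) as hx. pose proof (T_spec k hk1 y) as hy.
  destruct (Rle_lt_dec (T k x) (T k y)).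
  - pose proof (phi_mono k hk1 _ _ r). rewrite hx, hy in H. split; [lra|].
    apply Rmult_le_reg_l with (1 - k); [lra|]. field_simplify; lra.
  - pose proof (phi_mono k hk1 _ _ (Rlt_le _ _ r)). rewrite hx, hy in H.
    exfalso. nra.
Qed.

Lemma T_0 k (hk1 : k < 1) : T k 0 = 0.
Proof. rewrite <- (phi_0 k) at 1. apply T_phi; auto. Qed.

Lemma T_lip_abs k (hk1 : k < 1) x y : Rabs (T k y - T k x) <= Rabs (y - x) / (1 - k).
Proof.
  destruct (Rle_lt_dec x y).
  - pose proof (T_lip k hk1 x y r). rewrite !Rabs_right; lra.
  - pose proof (T_lip k hk1 y x (Rlt_le _ _ r)). rewrite (Rabs_left (y - x)) by lra.
    rewrite Rabs_left1 by lra. lra.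
Qed.

Lemma is_derive_T k (hk1 : k < 1) y : is_derive (T k) y (/ (cosh (T k y) - k)).
Proof.
  apply is_derive_Reals. intros eps heps.
  set (t := T k y). set (d := cosh t - k).
  assert (hd : 1 - k <= d) by (unfold d; pose proof (cosh_ge1 t); lra).
  assert (hd0 : 0 < d) by lra.
  pose proof (proj1 (is_derive_Reals _ _ _) (is_derive_phi k t)) as hp. fold d in hp.
  set (eta := Rmin (d/2) (eps * d^2 / 2)).
  assert (heta : 0 < eta) by (unfold eta; apply Rmin_pos; [lra| apply Rdiv_lt_0_compat; [apply Rmult_lt_0_compat; [lra| apply pow_lt; lra]|lra]]).
  destruct (hp eta heta) as [d1 hd1].
  assert (hdel : 0 < d1 * (1 - k)) by (apply Rmult_lt_0_compat; [apply cond_pos|lra]).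
  exists (mkposreal _ hdel). intros h hh0 hh. simpl in hh.
  set (s := T k (y + h) - t).
  assert (hs : Rabs s < d1).
  { unfold s, t. pose proof (T_lip_abs k hk1 y (y + h)).
    replace (y + h - y) with h in H by ring.
    apply Rle_lt_trans with (Rabs h / (1 - k)); auto.
    apply Rmult_lt_reg_r with (1 - k); [lra|]. field_simplify; lra. }
  assert (hs0 : s <> 0).
  { intro e. assert (T k (y + h) = t) by (unfold s in e; lra).
    pose proof (T_spec k hk1 (y + h)). rewrite H in H0. unfold t in H0. rewrite T_spec in H0 by auto. lra. }
  specialize (hd1 s hs0 hs).
  assert (ephi : phi k (t + s) - phi k t = h).
  { unfold s. replace (t + (T k (y + h) - t)) with (T k (y + h)) by ring.
    unfold t. rewrite !T_spec by auto. ring. }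
  rewrite ephi in hd1.
  set (q := h / s) in hd1.
  assert (hq : Rabs (q - d) < eta) by exact hd1.
  assert (e1 : s / h = / q) by (unfold q; field; auto).
  rewrite e1.
  assert (hqd : Rabs (q - d) < d/2) by (apply Rlt_le_trans with eta; [auto| apply Rmin_l]).
  assert (hqd2 : Rabs (q - d) < eps * d^2/2) by (apply Rlt_le_trans with eta; [auto| apply Rmin_r]).
  apply Rabs_def2 in hqd. destruct hqd as [hq1 hq2].
  assert (hqpos : d/2 < q) by lra.
  replace (/ q - / d) with ((d - q) / (q * d)) by (field; lra).
  unfold Rdiv. rewrite Rabs_mult, Rabs_inv, (Rabs_right (q * d)) by nra.
  rewrite <- Rabs_Ropp. replace (- (d - q)) with (q - d) by ring.
  apply Rmult_lt_reg_r with (q * d); [nra|].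
  rewrite Rmult_assoc, Rinv_l by nra. rewrite Rmult_1_r.
  apply Rlt_le_trans with (eps * d^2/2); auto.
  assert (d^2/2 <= q*d) by nra.
  replace (eps * d^2/2) with (eps * (d^2/2)) by field.
  apply Rmult_le_compat_l; lra.
Qed.

Inductive ex := EC (r : R) | ECh | ESh | EIv | EAdd (a b : ex) | EMul (a b : ex).

Fixpoint ev (k : R) (e : ex) (t : R) : R :=
  match e with
  | EC r => r
  | ECh => cosh t
  | ESh => sinh t
  | EIv => / (cosh t - k)
  | EAdd a b => ev k a t + ev k b t
  | EMul a b => ev k a t * ev k b t
  end.

Fixpoint D (e : ex) : ex :=
  match e with
  | EC _ => EC 0
  | ECh => ESh
  | ESh => ECh
  | EIv => EMul (EC (-1)) (EMul ESh (EMul EIv EIv))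
  | EAdd a b => EAdd (D a) (D b)
  | EMul a b => EAdd (EMul (D a) b) (EMul a (D b))
  end.

Lemma is_derive_ev k (hk1 : k < 1) e t : is_derive (ev k e) t (ev k (D e) t).
Proof.
  induction e; simpl.
  - apply (is_derive_const r t).
  - apply is_derive_cosh.
  - apply is_derive_sinh.
  - assert (h : cosh t - k <> 0) by (pose proof (cosh_ge1 t); lra).
    eapply is_derive_ext; [intro; reflexivity|].
    replace (-1 * (sinh t * (/ (cosh t - k) * / (cosh t - k)))) with (- sinh t / (cosh t - k) ^ 2)
      by (field; auto).
    apply (is_derive_inv (fun t => cosh t - k)); auto.
    replace (sinh t) with (sinh t - 0) by ring.
    apply (is_derive_minus cosh (fun _ => k)); [apply is_derive_cosh| apply (@is_derive_const R_AbsRing R_NormedModule k t)].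
  - apply (is_derive_plus (ev k e1) (ev k e2)); auto.
  - apply (is_derive_mult (ev k e1) (ev k e2)); auto. intros; apply Rmult_comm.
Qed.

Definition Dt (e : ex) : ex := EMul (D e) EIv.

Fixpoint DtN (n : nat) (e : ex) : ex :=
  match n with O => e | S n => Dt (DtN n e) end.

Definition evT k e := fun x => ev k e (T k x).

Lemma is_derive_evT k (hk1 : k < 1) e x : is_derive (evT k e) x (ev k (Dt e) (T k x)).
Proof.
  unfold evT, Dt; simpl.
  rewrite Rmult_comm.
  apply (is_derive_comp (ev k e) (T k) x).
  - apply is_derive_ev; auto.
  - apply is_derive_T; auto.
Qed.

Lemma Derive_n_evT k (hk1 : k < 1) n e : Derive_n (evT k e) n = evT k (DtN n e).
Proof.
  induction n; simpl.
  - reflexivity.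
  - apply functional_extensionality; intro x. rewrite IHn.
    apply is_derive_unique. apply is_derive_evT; auto.
Qed.

Lemma ex_derive_n_evT k (hk1 : k < 1) n e x : ex_derive_n (evT k e) n x.
Proof.
  destruct n; simpl; auto.
  rewrite Derive_n_evT by auto. eexists. apply is_derive_evT; auto.
Qed.

Lemma cosh_sinh_exp t : cosh t + sinh t = exp t.
Proof. unfold cosh, sinh; field. Qed.

Lemma cosh2_sinh2 t : cosh t ^ 2 - 1 = sinh t ^ 2.
Proof.
  unfold cosh, sinh.
  assert (h3 : exp t * exp (-t) = 1) by (rewrite <- exp_plus, <- exp_0; f_equal; lra).
  field_simplify. nra.
Qed.

Lemma sinh_nonneg t : 0 <= t -> 0 <= sinh t.
Proof.
  intros ht. unfold sinh. assert (exp (-t) <= exp t) by (destruct (Req_dec t 0); [subst; rewrite Ropp_0; lra| left; apply exp_increasing; lra]). lra.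
Qed.

Lemma Gk_cosh k t : 0 <= t -> Gk k (cosh t) = phi k t.
Proof.
  intros ht. unfold Gk, phi.
  rewrite cosh2_sinh2, sqrt_pow2 by (apply sinh_nonneg; auto).
  rewrite cosh_sinh_exp, ln_exp. ring.
Qed.

Lemma arcosh_spec x : 1 <= x ->
  let s := ln (x + sqrt (x ^ 2 - 1)) in 0 <= s /\ cosh s = x /\ sinh s = sqrt (x ^ 2 - 1).
Proof.
  intros hx s.
  set (q := sqrt (x ^ 2 - 1)) in *.
  assert (hq0 : 0 <= q) by apply sqrt_pos.
  assert (hq2 : q * q = x ^ 2 - 1) by (apply sqrt_sqrt; nra).
  assert (hu : 0 < x + q) by lra.
  assert (e1 : exp s = x + q) by (apply exp_ln; auto).
  assert (e2 : exp (- s) = x - q).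
  { rewrite exp_Ropp, e1. apply (Rmult_eq_reg_l (x + q)); [rewrite Rinv_r by lra; nra | lra]. }
  split; [| unfold cosh, sinh; rewrite e1, e2; split; field].
  unfold s. rewrite <- ln_1. apply ln_le; lra.
Qed.

Lemma Hk_eq k (hk1 : k < 1) y : 0 <= y -> Hk k y = cosh (T k y).
Proof.
  intros hy.
  assert (hT : 0 <= T k y) by (pose proof (T_lip k hk1 0 y hy); rewrite T_0 in H; lra).
  assert (hP : 1 <= cosh (T k y) /\ Gk k (cosh (T k y)) = y).
  { split; [apply cosh_ge1|]. rewrite Gk_cosh by auto. apply T_spec; auto. }
  unfold Hk.
  destruct (epsilon_spec (inhabits 1) (fun x => 1 <= x /\ Gk k x = y) (ex_intro _ _ hP)) as [h1 h2].
  set (x := epsilon (inhabits 1) (fun x => 1 <= x /\ Gk k x = y)) in *.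
  destruct (arcosh_spec x h1) as [hs0 [hs1 hs2]].
  set (s := ln (x + sqrt (x ^ 2 - 1))) in *.
  assert (hG : Gk k x = phi k s) by (unfold Gk, phi; rewrite hs2; reflexivity).
  rewrite hG in h2. rewrite <- h2, T_phi by auto. auto.
Qed.

Lemma part3 k (hk0 : 0 < k) (hk1 : k < 1) :
  exists M X : R, forall x : R, X < x ->
      Rabs (Hk k x - x - k * ln x - k ^ 2 * ln x / x) <= M.
Proof.
  exists (2 + ln 8), (exp 8). intros x hx.
  assert (hx0 : 0 < x) by (pose proof (exp_pos 8); lra).
  set (t := T k x).
  assert (hxt : phi k t = x) by apply T_spec, hk1.
  assert (ht : 8 < t).
  { destruct (Rlt_le_dec 8 t); auto. exfalso.
    pose proof (phi_mono k hk1 t 8 r).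
    assert (phi k 8 < exp 8).
    { unfold phi, sinh. pose proof (exp_pos (Ropp 8)). pose proof (exp_pos 8). lra. }
    nra. }
  rewrite Hk_eq by (auto; lra). fold t.
  assert (hch : cosh t - x = exp (- t) + k * t).
  { rewrite <- hxt. unfold phi, cosh, sinh. field. }
  assert (ha0 : 0 < exp (-t)) by apply exp_pos.
  assert (ha1 : exp (-t) < 1) by (rewrite <- exp_0; apply exp_increasing; lra).
  assert (hxe : x < exp t).
  { rewrite <- hxt. unfold phi, sinh. pose proof (exp_pos t). assert (0 < k * t) by nra. lra. }
  assert (hb1 : ln x < t) by (rewrite <- (ln_exp t); apply ln_increasing; auto).
  assert (hh : exp (t/2) * exp (t/2) = exp t) by (rewrite <- exp_plus; f_equal; lra).
  assert (hh2 : 1 + t/2 < exp (t/2)) by (apply exp_ineq1; lra).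
  assert (hx8 : exp t / 8 <= x).
  { rewrite <- hxt. unfold phi, sinh. assert (k * t < t) by nra. nra. }
  assert (hb2 : t - ln 8 <= ln x).
  { assert (exp t / 8 = exp (t - ln 8)) by (unfold Rminus; rewrite exp_plus, exp_Ropp, exp_ln by lra; field).
    rewrite <- (ln_exp (t - ln 8)). rewrite <- H.
    destruct hx8 as [h|h]; [left; apply ln_increasing; auto; pose proof (exp_pos t); lra| rewrite h; lra]. }
  assert (hl8 : 0 < ln 8) by (rewrite <- ln_1; apply ln_increasing; lra).
  assert (hlx0 : 0 < ln x).
  { rewrite <- ln_1. apply ln_increasing; [lra|]. pose proof (exp_ineq1 8). lra. }
  assert (hlx1 : ln x < x).
  { rewrite <- (ln_exp x) at 2. apply ln_increasing; auto. pose proof (exp_ineq1 x). lra. }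
  assert (hc0 : 0 < ln x / x) by (apply Rdiv_lt_0_compat; lra).
  assert (hc1 : ln x / x < 1) by (apply Rmult_lt_reg_r with x; auto; field_simplify; lra).
  replace (cosh t - x - k * ln x - k ^ 2 * ln x / x) with
    (exp (-t) + k * (t - ln x) - k^2 * (ln x / x)) by (replace (cosh t) with (x + exp (-t) + k * t) by lra; field; lra).
  assert (0 < k * (t - ln x) <= ln 8) by (split; nra).
  assert (hk2 : 0 < k^2 < 1) by (split; nra).
  assert (0 < k^2 * (ln x / x) < 1) by (split; nra).
  apply Rabs_le; lra.
Qed.

Lemma ball_R (x e y : R) : ball x e y <-> Rabs (y - x) < e.
Proof. reflexivity. Qed.

Lemma part2 k (hk0 : 0 < k) (hk1 : k < 1) :
  filterlim
    (fun x => (Hk k x - 1 - x ^ 2 / (2 * (1 - k) ^ 2)) / (x ^ 2 / (1 - k) ^ 2))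
    (at_right 0) (locally 0).
Proof.
  set (f := evT k ECh).
  set (g := evT k (DtN 2 ECh)).
  assert (hg0 : g 0 = / (1 - k) ^ 2).
  { unfold g, evT; simpl. rewrite T_0, cosh_0, sinh_0 by auto. field. lra. }
  assert (hf0 : f 0 = 1) by (unfold f, evT; simpl; rewrite T_0, cosh_0 by auto; reflexivity).
  assert (hf1 : Derive_n f 1 0 = 0).
  { unfold f; rewrite Derive_n_evT by auto. unfold evT; simpl. rewrite T_0, sinh_0 by auto. ring. }
  assert (hf2 : forall z, Derive_n f 2 z = g z) by (intro; unfold f; rewrite Derive_n_evT by auto; reflexivity).
  assert (hgc : continuous g 0) by (apply (ex_derive_continuous g); eexists; apply is_derive_evT; auto).
  apply filterlim_locally. intros eps.
  assert (he : 0 < eps * 2 / (1 - k) ^ 2) by (apply Rdiv_lt_0_compat; [pose proof (cond_pos eps); lra| apply pow_lt; lra]).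
  destruct (proj1 (filterlim_locally g (g 0)) hgc (mkposreal _ he)) as [delta hdelta].
  exists delta. intros y hy hy0. simpl in hy0.
  assert (hy' : Rabs (y - 0) < delta) by exact hy. rewrite Rminus_0_r, Rabs_right in hy' by lra.
  destruct (Taylor_Lagrange f 1 0 y hy0) as [z [hz hfz]].
  { intros; apply ex_derive_n_evT; auto. }
  rewrite hf2 in hfz. cbn [sum_f_R0] in hfz. rewrite hf1 in hfz.
  change (Derive_n f 0 0) with (f 0) in hfz. rewrite hf0 in hfz.
  assert (hfy : f y = 1 + y ^ 2 / 2 * g z) by (rewrite hfz; simpl; field).
  assert (hgz : ball (g 0) (eps * 2 / (1 - k) ^ 2) (g z)).
  { apply hdelta. apply ball_R. rewrite Rminus_0_r, Rabs_right by lra. lra. }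
  apply ball_R in hgz. apply ball_R.
  rewrite Hk_eq by (auto; lra). fold (ev k ECh (T k y)). fold (evT k ECh y). fold f.
  rewrite hfy.
  replace ((1 + y ^ 2 / 2 * g z - 1 - y ^ 2 / (2 * (1 - k) ^ 2)) / (y ^ 2 / (1 - k) ^ 2) - 0) with
     ((1 - k) ^ 2 / 2 * (g z - g 0)) by (rewrite hg0; field; split; lra).
  rewrite Rabs_mult, Rabs_right by (apply Rle_ge, Rdiv_le_0_compat; [apply pow2_ge_0|lra]).
  assert (hp : 0 < (1 - k) ^ 2) by (apply pow_lt; lra).
  apply Rmult_lt_reg_l with (2 / (1 - k) ^ 2). apply Rdiv_lt_0_compat; lra.
  replace (2 / (1 - k) ^ 2 * ((1 - k) ^ 2 / 2 * Rabs (g z - g 0))) with (Rabs (g z - g 0)) by (field; lra).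
  replace (2 / (1 - k) ^ 2 * eps) with (eps * 2 / (1 - k) ^ 2) by (field; lra). auto.
Qed.

Theorem lemma2p10 (k : R) (hk0 : 0 < k) (hk1 : k < 1) :
  (* smoothness of H_kappa on [0,oo): it is the restriction of a C^oo function on R *)
  (exists f : R -> R,
      (forall (n : nat) (x : R), ex_derive_n f n x) /\
      (forall x : R, 0 <= x -> f x = Hk k x)) /\
  (* x -> 0+ : H(x) = 1 + x^2/(2(1-k)^2) + o(x^2/(1-k)^2) *)
  filterlim
    (fun x => (Hk k x - 1 - x ^ 2 / (2 * (1 - k) ^ 2)) / (x ^ 2 / (1 - k) ^ 2))
    (at_right 0) (locally 0) /\
  (* x -> +oo : H(x) = x + k ln x + k^2 ln x / x + O(1) *)
  (exists M X : R, forall x : R, X < x ->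
      Rabs (Hk k x - x - k * ln x - k ^ 2 * ln x / x) <= M).
Proof.
  split; [| split; [apply part2 | apply part3]; auto].
  exists (evT k ECh). split.
  - intros; apply ex_derive_n_evT; auto.
  - intros x hx. rewrite Hk_eq by auto. reflexivity.
Qed.
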